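(* Let $G=(V,E)$ be a graph. Assume there exists an isomorphism $f:\mathcal{A}(G)\to\mathcal{A}_{RW}(G)$ of the form $f(e_i)=\alpha_i e_{\pi(i)}$ for all $i\in V$, where $\alpha_i\neq 0$ are scalars and $\pi$ is a permutation of $V$. Then $G$ is a biregular graph or a regular graph.
   Context: Graphs are simple (no loops or multiple edges), connected, with countable (finite or infinite) vertex set $V$, and locally finite ($\deg(i)<\infty$ for all $i$, where $\deg(i)$ is the number of neighbors of $i$). The adjacency matrix is $A=(a_{ij})$ with $a_{ij}=1$ if $i,j$ are neighbors and $0$ otherwise. $G$ is regular if all vertices have the same degree. $G$ is biregular if it is bipartite with a bipartition $V=V_1\sqcup V_2$ (every edge joins $V_1$ to $V_2$) such that any two vertices on the same side have the same degree. An evolution algebra over $\mathbb{R}$ is an algebra with a countable basis $\{e_i\}$ (natural basis) such that $e_i\cdot e_j=0$ for $i\ne j$ and $e_i\cdot e_i=\sum_k c_{ik}e_k$. $\mathcal{A}(G)$ has natural basis $\{e_i:i\in V\}$ with $e_i\cdot e_i=\sum_{k\in V}a_{ik}e_k$; $\mathcal{A}_{RW}(G)$ has natural basis $\{e_i:i\in V\}$ with $e_i\cdot e_i=\sum_{k\in V}\frac{a_{ik}}{\deg(i)}e_k$; in both, $e_i\cdot e_j=0$ for $i\ne j$. An isomorphism is a bijective linear map preserving the product. *)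

(* Defs.v *)
From HB Require Import structures.
From mathcomp Require Import all_boot all_order all_algebra.
From mathcomp Require Import boolp classical_sets fsbigop reals.
Set Implicit Arguments. Unset Strict Implicit. Unset Printing Implicit Defensive.
Import Order.TTheory GRing.Theory Num.Theory.
Local Open Scope classical_set_scope.
Local Open Scope ring_scope.

(* A locally finite graph on a countable vertex type V is given by its
   (duplicate-free, finite) neighbour lists.  a_ij = 1 iff j \in nbrs i. *)
Definition adj {V : eqType} (nbrs : V -> seq V) : rel V :=
  fun i j => j \in nbrs i.

Definition deg {V : eqType} (nbrs : V -> seq V) (i : V) : nat := size (nbrs i).

Definition is_graph {V : eqType} (nbrs : V -> seq V) : Prop :=
  [/\ forall i, uniq (nbrs i),
      forall i, ~~ adj nbrs i i,
      forall i j, adj nbrs i j = adj nbrs j i &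
      forall i j, exists p : seq V, path (adj nbrs) i p && (last i p == j)].

Definition regular {V : eqType} (nbrs : V -> seq V) : Prop :=
  exists d : nat, forall i, deg nbrs i = d.

(* bipartite with bipartition V1 = [set i | side i], V2 = its complement,
   such that vertices on the same side have the same degree *)
Definition biregular {V : eqType} (nbrs : V -> seq V) : Prop :=
  exists side : V -> bool,
    (forall i j, adj nbrs i j -> side i != side j) /\
    (forall i j, side i = side j -> deg nbrs i = deg nbrs j).

(* Elements of an evolution algebra with natural basis {e_i : i in V} are
   finitely supported coordinate vectors x : V -> R. *)
Definition fin_supp {V : eqType} {R : realType} (x : V -> R) : Prop :=
  exists s : seq V, forall k, k \notin s -> x k = 0.

Definition basis_vec {V : eqType} {R : realType} (i : V) : V -> R :=
  fun k => if k == i then 1 else 0.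

(* product with structure constants C: e_i . e_j = 0 (i <> j),
   e_i . e_i = \sum_k C i k e_k; extended bilinearly *)
Definition evo_mul {V : choiceType} {R : realType} (C : V -> V -> R)
    (x y : V -> R) : V -> R :=
  fun k => \sum_(i \in [set: V]) (x i * y i * C i k).

Definition C_adj {V : eqType} {R : realType} (nbrs : V -> seq V) : V -> V -> R :=
  fun i k => (adj nbrs i k)%:R.

Definition C_RW {V : eqType} {R : realType} (nbrs : V -> seq V) : V -> V -> R :=
  fun i k => (adj nbrs i k)%:R / (deg nbrs i)%:R.

Definition evo_iso {V : choiceType} {R : realType} (C1 C2 : V -> V -> R)
    (f : (V -> R) -> (V -> R)) : Prop :=
  [/\ forall x, fin_supp x -> fin_supp (f x),
      forall (a : R) x y, fin_supp x -> fin_supp y ->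
        f (fun k => a * x k + y k) = (fun k => a * f x k + f y k),
      forall x y, fin_supp x -> fin_supp y -> f x = f y -> x = y,
      forall y, fin_supp y -> exists2 x, fin_supp x & f x = y &
      forall x y, fin_supp x -> fin_supp y ->
        f (evo_mul C1 x y) = evo_mul C2 (f x) (f y)].

(* Main.v *)
Require Import Defs.
From HB Require Import structures.
From mathcomp Require Import all_boot all_order all_algebra.
From mathcomp Require Import boolp classical_sets fsbigop reals.
Import Order.TTheory GRing.Theory Num.Theory.
Local Open Scope ring_scope.

Section Aux.
Local Open Scope classical_set_scope.
Lemma sum1 (R : realType) (V : choiceType) (F : V -> R) (i0 : V) :
  (forall j, j != i0 -> F j = 0) -> \sum_(j \in [set: V]) F j = F i0.
Proof.
move=> F0; rewrite -(fsbig_widen [set i0]) ?fsbig_set1 //.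
move=> j [_ /= hj]; apply: F0; apply/eqP => e; exact: hj.
Qed.
End Aux.

Lemma evo_mul_basis (R : realType) (V : choiceType) (C : V -> V -> R) (c : R) (i : V) :
  evo_mul C (fun k => c * basis_vec i k) (fun k => c * basis_vec i k) = (fun m => c ^+ 2 * C i m).
Proof.
apply: funext => m; rewrite /evo_mul (@sum1 _ _ _ i).
  by rewrite /basis_vec eqxx mulr1 expr2.
by move=> j hj; rewrite /basis_vec (negbTE hj) !mulr0 !mul0r.
Qed.

Lemma evo_mul_basis1 (R : realType) (V : choiceType) (C : V -> V -> R) (i : V) :
  evo_mul C (basis_vec i) (basis_vec i) = C i.
Proof.
apply: funext => m; rewrite /evo_mul (@sum1 _ _ _ i).
  by rewrite /basis_vec eqxx !mul1r.
by move=> j hj; rewrite /basis_vec (negbTE hj) !mul0r.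
Qed.

Theorem proposition2p11 (R : realType) (V : countType) (nbrs : V -> seq V)
    (hG : is_graph nbrs)
    (f : (V -> R) -> (V -> R)) (alpha : V -> R) (pi : V -> V)
    (hpi : bijective pi) (halpha : forall i, alpha i != 0)
    (hf : evo_iso (C_adj nbrs) (C_RW nbrs) f)
    (hfe : forall i, f (basis_vec i) = (fun k => alpha i * basis_vec (pi i) k)) :
  biregular nbrs \/ regular nbrs.
Proof.
case: hG => huniq hirr hsym hconn.
case: hf => _ hlin _ _ hmul.
case: hpi => g piK gK.
have fs_b : forall i, fin_supp (basis_vec i : V -> R).
  by move=> i; exists [:: i] => k; rewrite inE /basis_vec => /negbTE ->.
have f0 : f (fun _ => 0) = (fun _ => 0).
  have z : fin_supp (fun _ : V => (0:R)) by exists [::].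
  have := hlin (-1) _ _ z z.
  have -> : (fun k : V => -1 * 0 + 0) = (fun _ => (0:R)) by apply: funext => k; rewrite mulr0 addr0.
  move=> ->; apply: funext => k; rewrite mulN1r addNr //.
have find : forall s : seq V, uniq s ->
   f (fun m => (m \in s)%:R) = (fun m => (g m \in s)%:R * alpha (g m)).
  elim => [|x s IH] /=.
    by move=> _; rewrite f0; apply: funext => m; rewrite mul0r.
  case/andP => xs us.
  have -> : (fun m => (m \in x :: s)%:R) = (fun m => 1 * basis_vec x m + (m \in s)%:R :> R).
    apply: funext => m; rewrite inE /basis_vec mul1r; case: eqP => [->|_] /=.
      by rewrite (negbTE xs) /= mulr0n mulr1n addr0.
    by rewrite add0r.
  rewrite hlin //; last by exists s => k /negbTE ->.
  rewrite hfe IH //; apply: funext => m; rewrite inE /basis_vec mul1r.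
  have -> : (m == pi x) = (g m == x).
    apply/eqP/eqP => [->|<-]; [by rewrite piK | by rewrite gK].
  case: eqP => [->|_]; last by rewrite mulr0 add0r.
  by rewrite (negbTE xs) /= ?mulr0n ?mulr1n ?mul0r ?mul1r ?addr0 ?mulr1.
have heq : forall i k, (adj nbrs i k)%:R * alpha k =
     alpha i ^+ 2 * ((adj nbrs (pi i) (pi k))%:R / (deg nbrs (pi i))%:R).
  move=> i k.
  have := hmul _ _ (fs_b i) (fs_b i).
  rewrite evo_mul_basis1 hfe evo_mul_basis.
  have -> : C_adj nbrs i = (fun m => (m \in nbrs i)%:R :> R) by [].
  rewrite find // => /(congr1 (fun h => h (pi k))).
  by rewrite piK.
have adjpi : forall i k, adj nbrs (pi i) (pi k) = adj nbrs i k.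
  move=> i k; have := heq i k.
  case E1: (adj nbrs i k); case E2: (adj nbrs (pi i) (pi k)) => //=.
    move/eqP; rewrite mulr0n mul0r mulr0 mulr1n mul1r.
    by rewrite (negbTE (halpha k)).
  have hd : (0 < deg nbrs (pi i))%N.
    by move: E2; rewrite /adj /deg; case: (nbrs (pi i)).
  move/eqP; rewrite mulr0n mul0r mulr1n mul1r eq_sym mulf_eq0 expf_eq0.
  rewrite (negbTE (halpha i)) andbF /= invr_eq0 pnatr_eq0.
  by move/eqP => h0; move: hd; rewrite h0.
have degpi : forall i, deg nbrs (pi i) = deg nbrs i.
  move=> i; rewrite /deg.
  have pinj : injective pi := can_inj piK.
  rewrite -(size_map pi (nbrs i)); apply/esym/perm_size.
  apply: uniq_perm; first by rewrite (map_inj_uniq pinj) huniq.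
    exact: huniq.
  move=> m; rewrite -{1 2}(gK m) (mem_map pinj).
  by have := adjpi i (g m); rewrite /adj => ->.
have degpos : forall i k, adj nbrs i k -> (0 < deg nbrs i)%N.
  by move=> i k; rewrite /adj /deg; case: (nbrs i).
have key : forall i k, adj nbrs i k -> alpha k * (deg nbrs i)%:R = alpha i ^+ 2.
  move=> i k hik; have := heq i k; rewrite adjpi degpi hik mulr1n mul1r => ->.
  have hn : (deg nbrs i)%:R != 0 :> R by rewrite pnatr_eq0 -lt0n (degpos _ _ hik).
  by rewrite mul1r -mulrA mulVf ?mulr1.
have dist2 : forall i k j, adj nbrs i k -> adj nbrs k j -> alpha i = alpha j.
  move=> i k j hik hkj.
  have h1 := key k i (etrans (hsym k i) hik).
  have h2 := key k j hkj.
  have hn : (deg nbrs k)%:R != 0 :> R by rewrite pnatr_eq0 -lt0n (degpos _ _ hkj).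
  by apply: (mulIf hn); rewrite h1 h2.
have parity : forall p s, path (adj nbrs) s p ->
    (~~ odd (size p) -> alpha (last s p) = alpha s) /\
    (odd (size p) -> forall k, adj nbrs s k -> alpha (last s p) = alpha k).
  elim => [|x p IH] s /=; first by [].
  case/andP => hsx hp; have [IH1 IH2] := IH x hp.
  split.
    rewrite negbK => ho; apply: IH2 => //; by rewrite hsym.
  move=> he k hk; rewrite IH1 //; apply: (dist2 x s k) => //; by rewrite hsym.
case: (pselect (exists r : V, True)) => [[r _]|nV]; last first.
  by right; exists 0%N => i; exfalso; apply: nV; exists i.
case E: (nbrs r) => [|nr rest].
  right; exists (deg nbrs r) => j.
  have [p /andP[hp /eqP hl]] := hconn r j.
  case: p hp hl => [|x p] /=; first by move=> _ ->.
  by rewrite /adj E.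
have hr : adj nbrs r nr by rewrite /adj E inE eqxx.
set a := alpha r; set b := alpha nr.
have par : forall p, path (adj nbrs) r p ->
    alpha (last r p) = if odd (size p) then b else a.
  move=> p hp; have [P1 P2] := parity p r hp.
  by case: ifP => ho; [apply: P2 | apply: P1; rewrite ho].
have nbr : forall j, exists k, adj nbrs j k.
  move=> j; have [p /andP[hp /eqP hl]] := hconn j r.
  case: p hp hl => [|x p] /=; first by move=> _ ->; exists nr.
  by case/andP => hx _ _; exists x.
have twov : forall j, alpha j = a \/ alpha j = b.
  move=> j; have [p /andP[hp /eqP hl]] := hconn r j.
  by have := par p hp; rewrite hl; case: ifP => _ ->; [right|left].
have [ab|ab] := eqVneq a b.
  right; exists (deg nbrs r) => j.
  have [k hk] := nbr j.
  have allA : forall x, alpha x = a by move=> x; case: (twov x) => ->.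
  have h1 := key j k hk; have h2 := key r nr hr.
  rewrite !allA in h1 h2.
  apply/eqP; rewrite -(eqr_nat R); apply/eqP.
  by apply: (mulfI (halpha r)); rewrite -/a h1 h2.
left.
have oppo : forall i k, adj nbrs i k -> alpha k = a + b - alpha i.
  move=> i k hik; have [p /andP[hp /eqP hl]] := hconn r i.
  have hp' : path (adj nbrs) r (rcons p k) by rewrite rcons_path hp hl hik.
  have := par _ hp'; rewrite last_rcons size_rcons /= => ->.
  have := par _ hp; rewrite hl => ->.
  by case: (odd (size p)) => /=; rewrite addrC ?addKr // (addrC a b) addKr.
exists (fun j => alpha j == a); split.
  move=> i k hik; rewrite (oppo _ _ hik).
  case: (twov i) => ->.
    by rewrite (addrC a b) addrK eqxx (eq_sym b a) (negbTE ab).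
  by rewrite addrK eqxx (eq_sym b a) (negbTE ab).
move=> i j hs.
have hij : alpha i = alpha j.
  move: hs; case: (twov i) => ->; case: (twov j) => -> //; rewrite eqxx.
    by rewrite (eq_sym b a) (negbTE ab).
  by rewrite (eq_sym b a) (negbTE ab).
have [k hk] := nbr i; have [l hl] := nbr j.
have h1 := key i k hk; have h2 := key j l hl.
rewrite (oppo _ _ hk) hij in h1; rewrite (oppo _ _ hl) in h2.
have hnz : a + b - alpha j != 0 by rewrite -hij -(oppo _ _ hk).
apply/eqP; rewrite -(eqr_nat R); apply/eqP.
by apply: (mulfI hnz); rewrite h1 h2.
Qed.
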